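(* Let $T$ be a metric tree with six leaves (unbounded legs), all of whose vertices have genus $0$. Then, up to isomorphism, there is exactly one metric graph $\Gamma$ of genus two with six legs together with a tropical hyperelliptic cover $\pi\colon\Gamma\to T$ (a harmonic map of degree two) that is branched at all six legs of $T$.
   Context: A metric graph is a connected graph with vertices $V$, edges $E$ and unbounded legs, with a genus function $g\colon V\to\mathbb{Z}_{\ge0}$ and positive lengths on edges (legs have infinite length); its genus is $b_1+\sum_v g(v)$, $b_1=|E|-|V|+1$. A morphism of metric graphs $\pi\colon\Gamma\to\Gamma'$ sends vertices to vertices and edges (legs) to edges (legs), linearly with integer slope $w(e)\in\mathbb{Z}_{>0}$ on each edge or leg $e$ (so $w(e)=\ell(\pi(e))/\ell(e)$). It is harmonic if for every vertex $v$ of $\Gamma$ the number $d_v=\sum_{e\ni v,\ \pi(e)=e'}w(e)$ is independent of the edge $e'$ adjacent to $\pi(v)$; the degree of $\pi$ is the sum of the $d_v$ over the fiber of any vertex. A tropical hyperelliptic cover of a genus-zero metric tree $T$ is a surjective degree-two harmonic map $\pi\colon\Gamma\to T$ satisfying, at every vertex $v$ of $\Gamma$, the local Riemann–Hurwitz condition $2-2g(v)=2d_v-\#\{e\ni v: w(e)=2\}$. A leg or edge of $T$ is a branch point if it is covered by a leg or edge of $\Gamma$ of weight $2$. *)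

(* Defs.v *)
From HB Require Import structures.
From mathcomp Require Import all_boot all_order all_algebra.
From mathcomp Require Import reals.
Set Implicit Arguments. Unset Strict Implicit. Unset Printing Implicit Defensive.
Import Order.TTheory GRing.Theory Num.Theory.
Local Open Scope ring_scope.

(** A metric graph: finite vertices, edges (each with two endpoints, the
    chosen orientation src/tgt carries no meaning) and unbounded legs (each
    attached to a vertex), a genus function and positive edge lengths.
    Legs have infinite length, so no length is recorded for them. *)
Record mgraph (R : realType) := MGraph {
  vert : finType;
  edge : finType;
  leg  : finType;
  esrc : edge -> vert;
  etgt : edge -> vert;
  legv : leg -> vert;
  gen  : vert -> nat;
  len  : edge -> R;
  len_pos : forall e, 0 < len e
}.

Section MetricGraphs.
Variable R : realType.

Definition inc (G : mgraph R) (v : vert G) (e : edge G) : bool :=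
  (esrc e == v) || (etgt e == v).

Definition adj (G : mgraph R) : rel (vert G) :=
  fun u v => [exists e : edge G,
     ((esrc e == u) && (etgt e == v)) || ((esrc e == v) && (etgt e == u))].

Definition connected_graph (G : mgraph R) : Prop :=
  forall u v : vert G, connect (@adj G) u v.

(** genus = b_1 + sum of vertex genera, b_1 = |E| - |V| + 1 *)
Definition genus (G : mgraph R) : int :=
  (#|edge G|%:Z - #|vert G|%:Z + 1 + (\sum_(v : vert G) gen v)%N%:Z)%R.

Definition is_tree (G : mgraph R) : Prop :=
  connected_graph G /\ (#|edge G| + 1 = #|vert G|)%N.

Record gmap (G H : mgraph R) := GMap {
  mV : vert G -> vert H;
  mE : edge G -> edge H;
  mL : leg G -> leg H;
  wE : edge G -> nat;
  wL : leg G -> nat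
}.

Definition is_morphism (G H : mgraph R) (p : gmap G H) : Prop :=
  [/\ (forall e, (0 < wE p e)%N),
      (forall l, (0 < wL p l)%N),
      (forall e,
          (mV p (esrc e) = esrc (mE p e) /\ mV p (etgt e) = etgt (mE p e)) \/
          (mV p (esrc e) = etgt (mE p e) /\ mV p (etgt e) = esrc (mE p e))),
      (forall l, legv (mL p l) = mV p (legv l))
    & (forall e, len (mE p e) = (wE p e)%:R * len e)].

Definition ldegE (G H : mgraph R) (p : gmap G H) (v : vert G) (e' : edge H) : nat :=
  (\sum_(e : edge G | inc v e && (mE p e == e')) wE p e)%N.

Definition ldegL (G H : mgraph R) (p : gmap G H) (v : vert G) (l' : leg H) : nat :=
  (\sum_(l : leg G | (legv l == v) && (mL p l == l')) wL p l)%N.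

Definition harmonic_with (G H : mgraph R) (p : gmap G H) (d : vert G -> nat) : Prop :=
  forall v : vert G,
    (forall e' : edge H, inc (mV p v) e' -> ldegE p v e' = d v) /\
    (forall l' : leg H, legv l' = mV p v -> ldegL p v l' = d v).

Definition surjective_map (G H : mgraph R) (p : gmap G H) : Prop :=
  [/\ (forall v', exists v, mV p v = v'),
      (forall e', exists e, mE p e = e')
    & (forall l', exists l, mL p l = l')].

Definition nram (G H : mgraph R) (p : gmap G H) (v : vert G) : nat :=
  (#|[pred e : edge G | inc v e && (wE p e == 2%N)]|
   + #|[pred l : leg G | (legv l == v) && (wL p l == 2%N)]|)%N.

(** tropical hyperelliptic cover: surjective harmonic morphism of degree two
    satisfying the local Riemann-Hurwitz condition at every vertex. *)
Definition hyperelliptic_cover (G H : mgraph R) (p : gmap G H) : Prop :=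
  is_morphism p /\ surjective_map p /\
  exists d : vert G -> nat,
    [/\ harmonic_with p d,
        (forall v' : vert H, (\sum_(v : vert G | mV p v == v') d v)%N = 2%N)
      & (forall v : vert G,
           (2%:Z - 2%:Z * (gen v)%:Z = 2%:Z * (d v)%:Z - (nram p v)%:Z)%R)].

Definition branched_at_leg (G H : mgraph R) (p : gmap G H) (l' : leg H) : Prop :=
  exists l : leg G, mL p l = l' /\ wL p l = 2%N.

Definition cover_iso (G1 G2 H : mgraph R) (p1 : gmap G1 H) (p2 : gmap G2 H) : Prop :=
  exists (fV : vert G1 -> vert G2) (fE : edge G1 -> edge G2) (fL : leg G1 -> leg G2),
    [/\ bijective fV, bijective fE & bijective fL] /\
    (forall e,
       (fV (esrc e) = esrc (fE e) /\ fV (etgt e) = etgt (fE e)) \/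
       (fV (esrc e) = etgt (fE e) /\ fV (etgt e) = esrc (fE e))) /\
    (forall l, legv (fL l) = fV (legv l)) /\
    (forall v, gen (fV v) = gen v) /\
    (forall e, len (fE e) = len e) /\
    [/\ (forall v, mV p2 (fV v) = mV p1 v),
        (forall e, mE p2 (fE e) = mE p1 e),
        (forall l, mL p2 (fL l) = mL p1 l),
        (forall e, wE p2 (fE e) = wE p1 e)
      & (forall l, wL p2 (fL l) = wL p1 l)].

Definition g2_cover (G T : mgraph R) (p : gmap G T) : Prop :=
  [/\ connected_graph G, genus G = 2%:Z, #|leg G| = 6%N,
      hyperelliptic_cover p
    & forall l' : leg T, branched_at_leg p l'].

End MetricGraphs.

(* Main.v *)
Require Import Defs.
From HB Require Import structures.
From mathcomp Require Import all_boot all_order all_algebra.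
From mathcomp Require Import reals.
From mathcomp Require Import zify.
Set Implicit Arguments. Unset Strict Implicit. Unset Printing Implicit Defensive.
Import Order.TTheory GRing.Theory Num.Theory.

Lemma cross (T : finType) (r : rel T) (A : pred T) x y :
  x \in A -> y \notin A -> connect r x y ->
  exists x' y', [/\ x' \in A, y' \notin A & r x' y'].
Proof.
move=> xA yA /connectP[p]; elim: p x xA => [|z p IH] x xA /=.
  by move=> _ eyx; rewrite eyx xA in yA.
case/andP=> rxz pz ey.
case zA: (z \in A); first exact: IH zA pz ey.
by exists x, z; rewrite zA.
Qed.

Section Graph.
Variable R : realType.
Variable G : mgraph R.
Implicit Types (S : {set edge G}) (u v x y : vert G) (e f : edge G).

Definition adjS S : rel (vert G) := fun u v => [exists e in S,
  ((esrc e == u) && (etgt e == v)) || ((esrc e == v) && (etgt e == u))].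

Lemma adjS_sym S : symmetric (adjS S).
Proof.
move=> u v; apply/existsP/existsP => -[e /andP[eS h]]; exists e;
  by rewrite eS /= orbC.
Qed.

Lemma adjS_sub S1 S2 : S1 \subset S2 -> subrel (adjS S1) (connect (adjS S2)).
Proof.
move=> /subsetP sub x y /existsP[e /andP[eS h]]; apply: connect1.
by apply/existsP; exists e; rewrite sub.
Qed.

Lemma adjE u v : adj u v = adjS setT u v.
Proof.
by apply/existsP/existsP => -[e h]; exists e; rewrite ?in_setT //; case/andP: h.
Qed.

Definition compo S a := [set x | connect (adjS S) a x].

Lemma compo_closed S a f : f \in S ->
  (esrc f \in compo S a) = (etgt f \in compo S a).
Proof.
move=> fS; rewrite !inE; apply/idP/idP => h; apply: (connect_trans h);
  apply: connect1; apply/existsP; exists f; by rewrite fS !eqxx ?orbT.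
Qed.

Definition ins S (A : {set vert G}) :=
  #|[set e in S | (esrc e \in A) && (etgt e \in A)]|.

Lemma grow S : (forall u v, connect (adjS S) u v) -> #|vert G| <= #|S| + 1.
Proof.
move=> conn.
case: (posnP #|vert G|) => [->//|n0].
have main : forall k, k < #|vert G| ->
    exists A : {set vert G}, #|A| = k.+1 /\ k <= ins S A.
  elim=> [|k IH] kV.
    case/card_gt0P: n0 => v0 _. by exists [set v0]; rewrite cards1.
  have [A [cA kA]] := IH (ltnW kV).
  have [w wA] : exists w, w \notin A.
    apply/existsP; rewrite -negb_forall; apply/negP => /forallP allA.
    have : #|[set: vert G]| <= #|A|.
      by apply/subset_leq_card/subsetP => v _; exact: allA.
    by rewrite cardsT cA leqNgt kV.
  have [a aA] : exists a, a \in A.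
    by apply/card_gt0P; rewrite cA.
  have [x' [y' [xA yA /existsP[e /andP[eS he]]]]] := cross aA wA (conn a w).
  exists (y' |: A); split; first by rewrite cardsU1 yA cA.
  apply: (leq_trans _ (proper_card _)); first exact: kA.
  apply/properP; split.
    apply/subsetP => f; rewrite !inE => /andP[-> /andP[h1 h2]].
    by rewrite h1 h2 !orbT.
  exists e.
    rewrite !inE eS; case/orP: he => /andP[/eqP-> /eqP->];
      by rewrite ?eqxx ?xA ?orbT.
  rewrite !inE eS /=; case/orP: he => /andP[/eqP-> /eqP->];
    by rewrite (negbTE yA) ?andbF.
have [A [cA kA]] := main #|vert G|.-1 ltac:(by rewrite ltn_predL).
have : ins S A <= #|S|.
  by apply/subset_leq_card/subsetP => f; rewrite inE => /andP[].
move: kA; rewrite /ins; lia.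
Qed.

Hypothesis tree : is_tree G.

Lemma bridge e0 : ~~ connect (adjS (~: [set e0])) (esrc e0) (etgt e0).
Proof.
apply/negP => c0.
have conn : forall u v, connect (adjS (~: [set e0])) u v.
  move=> u v; apply: (connect_sub _ (tree.1 u v)).
  move=> x y /existsP[e h].
  case: (e =P e0) => [ee|ne].
    subst e; case/orP: h => /andP[/eqP <- /eqP <-] //.
    by rewrite (sym_connect_sym (@adjS_sym _)).
  apply: connect1; apply/existsP; exists e; rewrite !inE.
  by move/eqP: ne => ->.
have := grow conn; rewrite cardsC1.
have := tree.2.
have : 0 < #|edge G| by apply/card_gt0P; exists e0.
lia.
Qed.

Lemma noloop e : esrc e != etgt e.
Proof. by apply/eqP => h; have := bridge e; rewrite h connect0. Qed.

Definition par S v := \big[addb/false]_(e in S) inc v e.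

Definition sdiff (A B : {set edge G}) := (A :\: B) :|: (B :\: A).

Lemma in_sdiff A B e : (e \in sdiff A B) = (e \in A) (+) (e \in B).
Proof. by rewrite !inE; case: (e \in A); case: (e \in B). Qed.

Lemma par_sdiff A B v : par (sdiff A B) v = par A v (+) par B v.
Proof.
rewrite /par !(big_mkcond (fun e => e \in _)) -big_split /=.
apply: eq_bigr => e _; rewrite in_sdiff.
by case: (e \in A); case: (e \in B); case: (inc v e).
Qed.

Lemma par1 e v : par [set e] v = inc v e.
Proof. by rewrite /par big_set1. Qed.

Lemma par0 v : par set0 v = false.
Proof. by rewrite /par big_set0. Qed.

Lemma sum_eq_in (A : {set vert G}) x :
  \big[addb/false]_(v in A) (x == v) = (x \in A).
Proof.
case xA: (x \in A).
  rewrite (bigD1 x) //= eqxx big1 // => v /andP[_ /negbTE].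
  by rewrite eq_sym.
rewrite big1 // => v vA; apply/negbTE/eqP => xv.
by rewrite xv vA in xA.
Qed.

Lemma inc_xor v e : inc v e = (esrc e == v) (+) (etgt e == v).
Proof.
rewrite /inc; case: (esrc e =P v) => [<-|]; case: (etgt e =P esrc e) => //=.
by move=> h; have := noloop e; rewrite h eqxx.
Qed.

Lemma sum_inc (A : {set vert G}) e :
  \big[addb/false]_(v in A) inc v e = (esrc e \in A) (+) (etgt e \in A).
Proof.
rewrite (eq_bigr (fun v => (esrc e == v) (+) (etgt e == v))); last first.
  by move=> v _; rewrite inc_xor.
by rewrite big_split /= !sum_eq_in.
Qed.

Lemma even_empty Rs : (forall v, ~~ par Rs v) -> Rs = set0.
Proof.
move=> ev; case: (set_0Vmem Rs) => // -[e0 e0R]; exfalso.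
pose K := compo (~: [set e0]) (esrc e0).
have H1 : \big[addb/false]_(v in K) par Rs v = false.
  by rewrite big1 // => v _; apply/negbTE.
move: H1; rewrite /par exchange_big /=.
rewrite (eq_bigr (fun e => (esrc e \in K) (+) (etgt e \in K))); last first.
  by move=> e _; rewrite sum_inc.
rewrite (bigD1 e0) //= big1.
  rewrite inE connect0 /=.
  by have := bridge e0; rewrite inE => /negbTE ->.
move=> e /andP[_ ne]; rewrite compo_closed ?addbb //.
by rewrite !inE.
Qed.

Lemma path_par x y : connect (@adj R G) x y ->
  exists P, forall v, par P v = (v == x) (+) (v == y).
Proof.
move/connectP=> [p]; elim: p x => [|z p IH] x /=.
  by move=> _ ->; exists set0 => v; rewrite par0 addbb.
case/andP=> /existsP[e he] pz ey.
have [P HP] := IH z pz ey.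
exists (sdiff P [set e]) => v; rewrite par_sdiff par1 HP inc_xor.
case/orP: he => /andP[/eqP-> /eqP->];
  rewrite ![_ == v]eq_sym;
  by case: (v == x); case: (v == y); case: (v == z).
Qed.

Lemma cobound (Ep : {set edge G}) (c : edge G -> bool) :
  exists tau : vert G -> bool,
    forall e, e \in Ep -> tau (esrc e) (+) tau (etgt e) = c e.
Proof.
suff H : forall n (Ep0 : {set edge G}), #|Ep0| = n -> exists tau : vert G -> bool,
    forall e, e \in Ep0 -> tau (esrc e) (+) tau (etgt e) = c e by exact: (H _ Ep erefl).
clear Ep.
move=> n; elim: n => [|n IH] Ep cE.
  exists (fun _ => false) => e eE.
  by move/eqP: cE; rewrite cards_eq0 => /eqP E0; rewrite E0 inE in eE.
have [e0 e0E] : exists e0, e0 \in Ep by apply/card_gt0P; rewrite cE.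
have cE' : #|Ep :\ e0| = n by move: cE; rewrite (cardsD1 e0) e0E => -[].
have [t0 Ht0] := IH _ cE'.
case h: (t0 (esrc e0) (+) t0 (etgt e0) == c e0).
  exists t0 => e eE; case: (e =P e0) => [->|ne]; first exact/eqP.
  by apply: Ht0; rewrite !inE eE andbT; apply/eqP.
pose K := compo (Ep :\ e0) (esrc e0).
exists (fun x => t0 x (+) (x \in K)) => e eE.
case: (e =P e0) => [->|ne].
  have tK : etgt e0 \notin K.
    rewrite inE; apply/negP => c1; have := bridge e0; rewrite (connect_sub _ c1) //.
    apply: adjS_sub; apply/subsetP => f; rewrite !inE => /andP[-> _] //.
  rewrite (negbTE tK) inE connect0 addbF.
  by move/negbT: h; case: (t0 (esrc e0)); case: (t0 (etgt e0)); case: (c e0).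
have eE' : e \in Ep :\ e0 by rewrite !inE eE andbT; apply/eqP.
rewrite (compo_closed _ eE').
rewrite -Ht0 //.
by case: (t0 (esrc e)); case: (t0 (etgt e)); case: (etgt e \in K).
Qed.

Definition nl v := #|[pred l : leg G | legv l == v]|.

Lemma nl_count v : nl v = count (fun l => legv l == v) (enum (leg G)).
Proof.
rewrite /nl cardE -size_filter; congr size.
by rewrite /enum_mem filter_predT /=; apply: eq_filter.
Qed.

Lemma seq_R (s : seq (vert G)) : ~~ odd (size s) ->
  exists Rs, forall v, par Rs v = odd (count_mem v s).
Proof.
suff H : forall n (s0 : seq (vert G)), size s0 <= n -> ~~ odd (size s0) ->
  exists Rs, forall v, par Rs v = odd (count_mem v s0) by exact: H.
elim=> [|m IH] s0.
  by case: s0 => // _ _; exists set0 => v; rewrite par0.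
case: s0 => [|x [|y s0]] /=.
- by move=> _ _; exists set0 => v; rewrite par0.
- by [].
move=> sn ev.
have [P HP] := path_par (tree.1 x y).
have [Rs HR] : exists Rs, forall v, par Rs v = odd (count_mem v s0).
  apply: IH; first by lia.
  by move: ev; rewrite negbK.
exists (sdiff Rs P) => v; rewrite par_sdiff HR HP !oddD !oddb.
rewrite ![_ == v]eq_sym.
by case: (v == x); case: (v == y); case: (odd _).
Qed.

Lemma exists_R : ~~ odd #|leg G| -> exists Rs, forall v, par Rs v = odd (nl v).
Proof.
move=> ev.
case: (@seq_R (map (@legv R G) (enum (leg G)))) => [|Rs HR].
  by rewrite size_map -cardE.
exists Rs => v; rewrite HR nl_count count_map; congr odd.
Qed.

Lemma R_unique R1 R2 : (forall v, par R1 v = odd (nl v)) ->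
  (forall v, par R2 v = odd (nl v)) -> R1 = R2.
Proof.
move=> h1 h2.
have : sdiff R1 R2 = set0.
  by apply: even_empty => v; rewrite par_sdiff h1 h2 addbb.
move=> h; apply/setP => e; have := in_sdiff R1 R2 e; rewrite h inE.
by case: (e \in R1); case: (e \in R2).
Qed.

Definition degS S v := (\sum_(e in S) (inc v e : nat))%N.
Definition rr S v := (degS S v + nl v)%N.
Definition spl0 S v := rr S v == 0.

Lemma odd_degS S v : odd (degS S v) = par S v.
Proof. by rewrite /degS (big_morph odd oddD (erefl : odd 0 = false)); apply: eq_bigr => e _; rewrite oddb. Qed.

Lemma two_inc f a b : inc a f -> inc b f -> a != b ->
  (esrc f = a /\ etgt f = b) \/ (esrc f = b /\ etgt f = a).
Proof.
rewrite /inc => /orP[]/eqP-> /orP[]/eqP->; rewrite ?eqxx //; by [left|right].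
Qed.

End Graph.

Lemma sum_bool_card (I : finType) (A : {set I}) (b : I -> bool) :
  (\sum_(i in A) (b i : nat))%N = #|[set i in A | b i]|.
Proof.
rewrite big_mkcond /= -sum1_card [RHS]big_mkcond /=; apply: eq_bigr => i _.
by rewrite inE; case: (i \in A); case: (b i).
Qed.

Lemma le_sum1 (I : finType) (P : pred I) (F : I -> nat) a :
  P a -> F a <= (\sum_(i | P i) F i)%N.
Proof. by move=> Pa; rewrite (bigD1 a) //= leq_addr. Qed.

Lemma le_sum2 (I : finType) (P : pred I) (F : I -> nat) a b :
  P a -> P b -> a != b -> (F a + F b <= \sum_(i | P i) F i)%N.
Proof.
move=> Pa Pb ab; rewrite (bigD1 a) //= (bigD1 b) /=; last by rewrite Pb eq_sym ab.
by rewrite addnA leq_addr.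
Qed.

Lemma le_sum3 (I : finType) (P : pred I) (F : I -> nat) a b c :
  P a -> P b -> P c -> a != b -> a != c -> b != c ->
  (F a + F b + F c <= \sum_(i | P i) F i)%N.
Proof.
move=> Pa Pb Pc ab ac bc; rewrite (bigD1 a) //= (bigD1 b) /=; last by rewrite Pb eq_sym ab.
rewrite (bigD1 c) /=; last by rewrite Pc eq_sym ac eq_sym bc.
by rewrite !addnA leq_addr.
Qed.

Lemma exists_term (I : finType) (P : pred I) (F : I -> nat) :
  0 < (\sum_(i | P i) F i)%N -> exists i, P i /\ 0 < F i.
Proof.
case: (pickP (fun i => P i && (0 < F i))) => [i /andP[]|none]; first by exists i.
rewrite big1 // => i Pi; have := none i; rewrite Pi /=.
by move/negbT; rewrite lt0n negbK => /eqP.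
Qed.



Record structured (R : realType) (T G : mgraph R) (p : gmap G T) (Rs : {set edge T})
  (sg : vert G -> bool) (sgE : edge G -> bool) : Prop := Struct {
  s_V1 : injective (fun v => (mV p v, sg v));
  s_V2 : forall v' b, (b ==> spl0 Rs v') -> exists v, mV p v = v' /\ sg v = b;
  s_V3 : forall v, sg v ==> spl0 Rs (mV p v);
  s_E1 : injective (fun e => (mE p e, sgE e));
  s_E2 : forall e' b, (b ==> (e' \notin Rs)) -> exists e, mE p e = e' /\ sgE e = b;
  s_E4 : forall e, sgE e ==> (mE p e \notin Rs);
  s_E3 : forall e x, inc x e -> sg x = sgE e && spl0 Rs (mV p x);
  s_W : forall e, wE p e = if mE p e \in Rs then 2%N else 1%N;
  s_L1 : injective (mL p);
  s_L2 : forall l', exists l, mL p l = l';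
  s_L3 : forall l, wL p l = 2%N;
  s_L4 : forall l, sg (legv l) = false;
  s_G : forall v, gen v = ((rr Rs (mV p v) - 2)./2)%N }.

Section Cover.
Variable R : realType.
Variables (T G : mgraph R) (p : gmap G T) (d : vert G -> nat).
Hypothesis Htree : is_tree T.
Hypothesis Hconn : connected_graph G.
Hypothesis Hlegs : 0 < #|leg G|.
Hypothesis Hmor : is_morphism p.
Hypothesis Hsurj : surjective_map p.
Hypothesis Hharm : harmonic_with p d.
Hypothesis Hfib : forall v' : vert T, (\sum_(v : vert G | mV p v == v') d v)%N = 2%N.
Hypothesis HRH : forall v : vert G,
  (2%:Z - 2%:Z * (gen v)%:Z = 2%:Z * (d v)%:Z - (nram p v)%:Z)%R.
Hypothesis Hbr : forall l', branched_at_leg p l'.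

Lemma inc_map v e : inc v e -> inc (mV p v) (mE p e).
Proof.
case: Hmor => _ _ Hend _ _; rewrite /inc.
by case: (Hend e) => -[h1 h2] /orP[]/eqP<-; rewrite ?h1 ?h2 eqxx ?orbT.
Qed.

Lemma ldegE_d v e' : inc (mV p v) e' -> ldegE p v e' = d v.
Proof. by move=> h; exact: (Hharm v).1 _ h. Qed.

Lemma wle v e : inc v e -> wE p e <= d v.
Proof.
move=> ve; rewrite -(ldegE_d (inc_map ve)) /ldegE.
by apply: (le_sum1 (P := fun f => inc v f && (mE p f == mE p e))); rewrite ve eqxx.
Qed.

Lemma wpos e : 0 < wE p e.
Proof. by case: Hmor => h _ _ _ _; exact: h. Qed.

Lemma wLpos l : 0 < wL p l.
Proof. by case: Hmor => _ h _ _ _; exact: h. Qed.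

Lemma legv_map l : legv (mL p l) = mV p (legv l).
Proof. by case: Hmor => _ _ _ h _; exact: h. Qed.

Lemma wL_le l : wL p l <= d (legv l).
Proof.
rewrite -((Hharm (legv l)).2 (mL p l) (legv_map l)) /ldegL.
by apply: (le_sum1 (P := fun f => (legv f == legv l) && (mL p f == mL p l))); rewrite !eqxx.
Qed.

Lemma d_pos v : 0 < d v.
Proof.
have [l0 _] : exists l0 : leg G, l0 \in leg G by apply/card_gt0P.
case: (v =P legv l0) => [->|nv]; first exact: leq_trans (wLpos l0) (wL_le l0).
have yA : legv l0 \notin [pred w | w == v].
  by rewrite inE; apply/eqP => h; apply: nv; rewrite h.
have xA : v \in [pred w | w == v] by rewrite inE.
have [x' [y' [hx' _ /existsP[e he]]]] := cross xA yA (Hconn v (legv l0)).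
move: hx'; rewrite inE => /eqP ?; subst x'.
have ve : inc v e.
  by rewrite /inc; case/orP: he => /andP[/eqP-> /eqP->]; rewrite eqxx ?orbT.
exact: leq_trans (wpos e) (wle ve).
Qed.

Lemma d_le2 v : d v <= 2.
Proof.
rewrite -(Hfib (mV p v)).
by apply: (le_sum1 (P := fun w => mV p w == mV p v)).
Qed.

Lemma fib2 v u : mV p u = mV p v -> d v = 2 -> u = v.
Proof.
move=> huv dv; apply/eqP; apply/negPn/negP => nuv.
have vu : v != u by rewrite eq_sym.
have := le_sum2 (P := fun w => mV p w == mV p v) d (eqxx _) (introT eqP huv) vu.
rewrite Hfib dv; have := d_pos u; lia.
Qed.

Lemma fib1 v : d v = 1 -> exists u, [/\ u != v, mV p u = mV p v, d u = 1 &
  forall w, mV p w = mV p v -> w = v \/ w = u].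
Proof.
move=> dv.
have h2 := Hfib (mV p v).
move: (h2); rewrite (bigD1 v) //= dv => h3.
have [u [/andP[/eqP hu nuv] du]] : exists u, (mV p u == mV p v) && (u != v) /\ 0 < d u.
  by apply: exists_term; lia.
have vu : v != u by rewrite eq_sym.
have hle := le_sum2 (P := fun w => mV p w == mV p v) d (eqxx _) (introT eqP hu) vu.
rewrite h2 dv in hle.
exists u; split => //; first by lia.
move=> w hw; case: (w =P v) => [->|nwv]; first by left.
case: (w =P u) => [->|nwu]; first by right.
have := le_sum3 (P := fun w => mV p w == mV p v) d (eqxx _) (introT eqP hu)
  (introT eqP hw) vu
  (introN eqP (fun h => nwv (esym h))) (introN eqP (fun h => nwu (esym h))).
rewrite h2 dv; have := d_pos w; lia.
Qed.

Lemma d12 v : d v = 1 \/ d v = 2.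
Proof. have := d_pos v; have := d_le2 v; lia. Qed.

Lemma end_over e v' : inc v' (mE p e) -> exists x, inc x e /\ mV p x = v'.
Proof.
case: Hmor => _ _ Hend _ _; rewrite /inc.
case: (Hend e) => -[h1 h2] /orP[]/eqP<-;
  by [exists (esrc e); rewrite eqxx | exists (etgt e); rewrite eqxx ?orbT].
Qed.

Lemma end_diff e : mV p (esrc e) != mV p (etgt e).
Proof.
case: Hmor => _ _ Hend _ _.
by case: (Hend e) => -[-> ->]; rewrite ?(eq_sym (etgt _)) (noloop Htree).
Qed.

Lemma end_uniq e x y : inc x e -> inc y e -> mV p x = mV p y -> x = y.
Proof.
move=> hx hy hxy; apply/eqP; apply/negPn/negP => nxy.
have := end_diff e.
by case: (two_inc hx hy nxy) => -[-> ->]; rewrite hxy eqxx.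
Qed.

Lemma lift_at e v' x : inc v' (mE p e) -> mV p x = v' -> d x = 2 -> inc x e.
Proof.
move=> h hx dx; have [y [hy hyv]] := end_over h.
by rewrite -(fib2 (etrans hyv (esym hx)) dx).
Qed.

Lemma w2_d e x : wE p e = 2 -> inc x e -> d x = 2.
Proof. move=> w2 hx; have := wle hx; have := d_le2 x; lia. Qed.

Lemma inc_src (e' : edge T) : inc (esrc e') e'.
Proof. by rewrite /inc eqxx. Qed.

Lemma two_lifts x e f : inc x e -> inc x f -> mE p e = mE p f -> e != f ->
  wE p e + wE p f <= d x.
Proof.
move=> xe xf hef nef; rewrite -(ldegE_d (inc_map xe)) /ldegE.
apply: (le_sum2 (P := fun g => inc x g && (mE p g == mE p e))) => //.
  by rewrite xe eqxx.
by rewrite xf hef eqxx.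
Qed.

Lemma w2_unique e f : mE p e = mE p f -> wE p f = 2 -> e = f.
Proof.
move=> hef wf.
have [x [xf hx]] := end_over (inc_src (mE p f)).
have dx := w2_d wf xf.
have xe : inc x e by apply: (lift_at _ hx dx); rewrite hef inc_src.
apply/eqP; apply/negPn/negP => nef.
have := two_lifts xe xf hef nef; rewrite wf dx; have := wpos e; lia.
Qed.

Definition Rp := [set e' | [exists f, (mE p f == e') && (wE p f == 2)]].

Lemma wE_Rp e : wE p e = if mE p e \in Rp then 2 else 1.
Proof.
rewrite inE; case: existsP => [[f /andP[/eqP hf /eqP wf]]|nf].
  by rewrite (w2_unique (esym hf) wf).
have := wpos e; have := wle (v := esrc e) (e := e) ltac:(by rewrite /inc eqxx); have := d_le2 (esrc e).
case: (wE p e =P 2) => [w2|]; last by lia.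
by exfalso; apply: nf; exists e; rewrite eqxx w2.
Qed.


Lemma mL_inj : injective (mL p).
Proof.
have key : forall l l0, mL p l = mL p l0 -> wL p l0 = 2 -> l = l0.
  move=> l l0 h w0.
  have d0 : d (legv l0) = 2 by have := wL_le l0; have := d_le2 (legv l0); lia.
  have hv : legv l = legv l0.
    apply: fib2 d0; by rewrite -!legv_map h.
  apply/eqP; apply/negPn/negP => nl0.
  have := le_sum2 (P := fun f => (legv f == legv l0) && (mL p f == mL p l0))
     (wL p) (a := l0) (b := l) ltac:(by rewrite /= !eqxx) ltac:(by rewrite /= hv h !eqxx)
     ltac:(by rewrite eq_sym).
  rewrite -/(ldegL p (legv l0) (mL p l0)) ((Hharm (legv l0)).2 _ (legv_map l0)) d0 w0.
  have := wLpos l; lia.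
move=> l1 l2 h.
have [l0 [h0 w0]] := Hbr (mL p l1).
by rewrite (key l1 l0 (esym h0) w0) (key l2 l0 (etrans (esym h) (esym h0)) w0).
Qed.

Lemma wL_val l : wL p l = 2.
Proof. by have [l0 [h0 w0]] := Hbr (mL p l); rewrite -(mL_inj h0). Qed.

Lemma legv_d2 l : d (legv l) = 2.
Proof. have := wL_le l; have := d_le2 (legv l); rewrite wL_val; lia. Qed.

Lemma nram_d1 v : d v = 1 -> nram p v = 0.
Proof.
move=> dv; rewrite /nram !eq_card0 //.
  move=> l; rewrite !inE; apply/negP => /andP[/eqP hl _].
  by have := legv_d2 l; rewrite hl dv.
move=> e; rewrite !inE; apply/negP => /andP[ve /eqP w2].
by have := wle ve; rewrite w2 dv.
Qed.

Lemma split_zero v : d v = 1 -> degS Rp (mV p v) = 0 /\ nl (mV p v) = 0.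
Proof.
move=> dv; split.
  rewrite /degS big1 // => e'; rewrite inE => /existsP[f /andP[/eqP hf /eqP wf]].
  apply/eqP; rewrite eqb0; apply/negP => hi.
  have [x [xf hx]] := end_over (e := f) (v' := mV p v) ltac:(by rewrite hf).
  have dx := w2_d wf xf.
  by have := fib2 (esym hx) dx => hvx; rewrite hvx dx in dv.
rewrite /nl eq_card0 // => l'; rewrite !inE; apply/negP => /eqP hl.
have [l [hl' wl]] := Hbr l'.
have h := legv_d2 l.
have := fib2 (u := v) (v := legv l) ltac:(by rewrite -legv_map hl' hl) h.
by move=> hv; rewrite hv h in dv.
Qed.

Lemma nram_d2 v : d v = 2 -> nram p v = (degS Rp (mV p v) + nl (mV p v))%N.
Proof.
move=> dv; rewrite /nram /degS sum_bool_card; congr addn.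
  set A := [set e | inc v e && (wE p e == 2)].
  have -> : #|[pred e | inc v e && (wE p e == 2)]| = #|A|.
    by apply: eq_card => e; rewrite !inE.
  have injA : {in A &, injective (mE p)}.
    move=> e1 e2; rewrite !inE => /andP[_ _] /andP[_ /eqP w2] h.
    exact: w2_unique h w2.
  rewrite -(card_in_imset injA); apply: eq_card => e'.
  rewrite [RHS]inE; apply/imsetP/idP.
    move=> [e]; rewrite inE => /andP[ve w2] ->.
    rewrite inc_map // andbT inE; apply/existsP; exists e; by rewrite eqxx.
  case/andP; rewrite inE => /existsP[f /andP[/eqP hf /eqP wf]] hi.
  exists f => //; rewrite inE wf eqxx andbT.
  by apply: (lift_at _ erefl dv); rewrite hf.
set B := [set l | legv l == v].
have -> : #|[pred l | (legv l == v) && (wL p l == 2)]| = #|B|.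
  by apply: eq_card => l; rewrite !inE wL_val eqxx andbT.
rewrite -(card_imset _ mL_inj) /nl; apply: eq_card => l'.
rewrite [RHS]inE; apply/imsetP/idP.
  by move=> [l]; rewrite inE => /eqP <- ->; rewrite legv_map.
move=> /eqP hl'; case: Hsurj => _ _ hs; have [l hl] := hs l'.
exists l => //; rewrite inE; apply/eqP; apply: fib2 dv.
by rewrite -legv_map hl hl'.
Qed.

Lemma RH2 v : d v = 2 -> nram p v = (2 + 2 * gen v)%N.
Proof. move=> dv; have := HRH v; rewrite dv; lia. Qed.

Lemma RH1 v : d v = 1 -> gen v = 0.
Proof. move=> dv; have := HRH v; rewrite dv nram_d1 //; lia. Qed.

Lemma par_Rp v' : par Rp v' = odd (nl v').
Proof.
case: Hsurj => hs _ _; have [v <-] := hs v'.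
rewrite -odd_degS; case: (d12 v) => dv.
  by have [-> ->] := split_zero dv.
have := RH2 dv; rewrite nram_d2 // => h.
have : odd (degS Rp (mV p v) + nl (mV p v)) = false by rewrite h oddD oddM.
by rewrite oddD; case: (odd _); case: (odd _).
Qed.

Variable Rs : {set edge T}.
Hypothesis HRs : forall v', par Rs v' = odd (nl v').

Lemma Rp_eq : Rp = Rs.
Proof. exact: (R_unique Htree par_Rp HRs). Qed.

Local Notation spl := (spl0 Rs).

Lemma spl_d v : spl (mV p v) = (d v == 1).
Proof.
rewrite /spl /rr -Rp_eq; case: (d12 v) => dv.
  by have [-> ->] := split_zero dv; rewrite dv.
by rewrite -nram_d2 // RH2 // dv.
Qed.

Lemma gen_val v : gen v = ((rr Rs (mV p v) - 2)./2)%N.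
Proof.
rewrite /rr -Rp_eq; case: (d12 v) => dv.
  by have [-> ->] := split_zero dv; rewrite RH1.
rewrite -nram_d2 // RH2 //.
have -> : (2 + 2 * gen v - 2 = (gen v).*2)%N by rewrite -mul2n; lia.
by rewrite doubleK.
Qed.

Lemma wE_val e : wE p e = if mE p e \in Rs then 2 else 1.
Proof. by rewrite -Rp_eq wE_Rp. Qed.

Lemma in_Rs_w2 e : mE p e \in Rs -> wE p e = 2.
Proof. by rewrite wE_val => ->. Qed.

Definition pickf v' := [pick u | mV p u == v'].
Definition sig0 v := pickf (mV p v) != Some v.

Lemma sig0_inj v w1 w2 : d v = 1 -> mV p w1 = mV p v -> mV p w2 = mV p v ->
  sig0 w1 = sig0 w2 -> w1 = w2.
Proof.
move=> dv h1 h2; rewrite /sig0 h1 h2 /pickf.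
case: pickP => [a /eqP ha|none]; last by have := none v; rewrite eqxx.
have [u [nuv hu du H]] := fib1 dv.
have nvu : v != u by rewrite eq_sym.
case: (H a ha) => ->; case: (H w1 h1) => ->; case: (H w2 h2) => ->;
  rewrite /= ?eqxx //= ?(inj_eq (@Some_inj _)) ?nuv ?nvu //.
Qed.

Lemma sig0_diff v w : d v = 1 -> mV p w = mV p v -> w != v -> sig0 w = ~~ sig0 v.
Proof.
move=> dv hw nwv; case h: (sig0 w == sig0 v).
  by move/eqP: h => /(sig0_inj dv hw erefl) h'; rewrite h' eqxx in nwv.
by move: h; case: (sig0 w); case: (sig0 v).
Qed.

Lemma xor_inc f a b : inc a f -> inc b f -> a != b ->
  sig0 (esrc f) (+) sig0 (etgt f) = sig0 a (+) sig0 b.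
Proof. by move=> ha hb nab; case: (two_inc ha hb nab) => -[-> ->] //; rewrite addbC. Qed.

Definition cc (e' : edge T) :=
  if [pick f | mE p f == e'] is Some f then sig0 (esrc f) (+) sig0 (etgt f) else false.

Lemma cc_ok e : spl (mV p (esrc e)) -> spl (mV p (etgt e)) ->
  sig0 (esrc e) (+) sig0 (etgt e) = cc (mE p e).
Proof.
rewrite !spl_d => /eqP d1 /eqP d2.
rewrite /cc; case: pickP => [f /eqP hf|none]; last by have := none e; rewrite eqxx.
case: (f =P e) => [->//|nfe].
have xe : inc (esrc e) e by rewrite /inc eqxx.
have ye : inc (etgt e) e by rewrite /inc eqxx orbT.
have [xf [hxf mxf]] := end_over (e := f) (v' := mV p (esrc e))
  ltac:(by rewrite hf; exact: inc_map xe).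
have [yf [hyf myf]] := end_over (e := f) (v' := mV p (etgt e))
  ltac:(by rewrite hf; exact: inc_map ye).
have nx : xf != esrc e.
  apply/eqP => ex; subst xf; have := two_lifts hxf xe hf (introN eqP nfe).
  rewrite d1; have := wpos e; have := wpos f; lia.
have ny : yf != etgt e.
  apply/eqP => ex; subst yf; have := two_lifts hyf ye hf (introN eqP nfe).
  rewrite d2; have := wpos e; have := wpos f; lia.
have nxy : xf != yf.
  by apply/eqP => exy; have := end_diff e; rewrite -mxf -myf exy eqxx.
rewrite (xor_inc hxf hyf nxy) (sig0_diff d1 mxf nx) (sig0_diff d2 myf ny).
by case: (sig0 (esrc e)); case: (sig0 (etgt e)).
Qed.

Definition Ep := [set e' : edge T | spl (esrc e') && spl (etgt e')].

Variable tau : vert T -> bool.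
Hypothesis Htau : forall e', e' \in Ep -> tau (esrc e') (+) tau (etgt e') = cc e'.

Definition sig v := spl (mV p v) && (sig0 v (+) tau (mV p v)).

Lemma sig_nspl v : ~~ spl (mV p v) -> sig v = false.
Proof. by rewrite /sig => /negbTE ->. Qed.

Lemma sig_tau e : spl (mV p (esrc e)) -> spl (mV p (etgt e)) ->
  sig (esrc e) = sig (etgt e).
Proof.
move=> s1 s2.
have hEp : mE p e \in Ep.
  rewrite inE; case: Hmor => _ _ Hend _ _.
  by case: (Hend e) => -[<- <-]; rewrite s1 s2.
have := Htau hEp; rewrite -cc_ok //.
have -> : tau (esrc (mE p e)) (+) tau (etgt (mE p e)) =
          tau (mV p (esrc e)) (+) tau (mV p (etgt e)).
  by case: Hmor => _ _ Hend _ _; case: (Hend e) => -[-> ->] //; rewrite addbC.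
rewrite /sig s1 s2 /=.
by case: (sig0 (esrc e)); case: (sig0 (etgt e)); case: (tau _); case: (tau _).
Qed.

Definition sigE e := (mE p e \notin Rs) &&
  [|| sig (esrc e), sig (etgt e) |
     [&& ~~ spl (mV p (esrc e)), ~~ spl (mV p (etgt e)) &
         [pick f | mE p f == mE p e] != Some e]].

Lemma E3 e x : inc x e -> sig x = sigE e && spl (mV p x).
Proof.
move=> xe; case sx: (spl (mV p x)); last by rewrite andbF sig_nspl ?sx.
rewrite andbT /sigE.
have notR : mE p e \notin Rs.
  apply/negP => hR; have := w2_d (in_Rs_w2 hR) xe.
  by move: sx; rewrite spl_d => /eqP ->.
rewrite notR /=.
case/orP: xe => /eqP hx; subst x.
  case sy: (spl (mV p (etgt e))).
    by rewrite -(sig_tau sx sy) sx /=; case: (sig _).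
  by rewrite (sig_nspl (negbT sy)) sx /=; case: (sig _).
case sy: (spl (mV p (esrc e))).
  by rewrite (sig_tau sy sx) sx /=; case: (sig _); rewrite ?andbF.
by rewrite (sig_nspl (negbT sy)) sx /=; case: (sig _); rewrite ?andbF.
Qed.

Lemma V1 : injective (fun v => (mV p v, sig v)).
Proof.
move=> v1 v2 [h12 hs]; case: (d12 v1) => dv.
  have s1 : spl (mV p v1) by rewrite spl_d dv.
  move: hs; rewrite /sig -h12 s1 /= => hs.
  apply: (sig0_inj dv) => //.
  by move: hs; case: (sig0 v1); case: (sig0 v2); case: (tau _).
exact: esym (fib2 (esym h12) dv).
Qed.

Lemma V2 v' b : (b ==> spl v') -> exists v, mV p v = v' /\ sig v = b.
Proof.
move=> hb; case: Hsurj => hs _ _; have [v hv] := hs v'; subst v'.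
case sv: (spl (mV p v)); last first.
  exists v; split => //; rewrite sig_nspl ?sv //.
  by move: hb; rewrite sv; case: b.
have dv : d v = 1 by move: sv; rewrite spl_d => /eqP.
have [u [nuv hu du _]] := fib1 dv.
have su := sig0_diff dv hu nuv.
case: (sig v =P b) => [<-|nb]; first by exists v.
exists u; split => //; move: nb; rewrite /sig hu sv /= su.
  by move: hb; case: b; case: (sig0 v); case: (tau _).
Qed.

Lemma ends_map e : (mV p (esrc e) = esrc (mE p e) /\ mV p (etgt e) = etgt (mE p e)) \/
  (mV p (esrc e) = etgt (mE p e) /\ mV p (etgt e) = esrc (mE p e)).
Proof. by case: Hmor => _ _ Hend _ _; exact: Hend. Qed.

Lemma sigE_nn e : ~~ spl (esrc (mE p e)) -> ~~ spl (etgt (mE p e)) ->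
  sigE e = (mE p e \notin Rs) && ([pick f | mE p f == mE p e] != Some e).
Proof.
move=> n1 n2.
have [m1 m2] : ~~ spl (mV p (esrc e)) /\ ~~ spl (mV p (etgt e)).
  by case: (ends_map e) => -[-> ->].
by rewrite /sigE !sig_nspl // m1 m2.
Qed.

Lemma spl_d2 x : ~~ spl (mV p x) -> d x = 2.
Proof. by rewrite spl_d; case: (d12 x) => ->. Qed.

Lemma ldeg_at x e' : mV p x = esrc e' ->
  (\sum_(g | inc x g && (mE p g == e')) wE p g)%N = d x.
Proof. by move=> hx; rewrite -/(ldegE p x e') ldegE_d // hx inc_src. Qed.

Lemma E1 : injective (fun e => (mE p e, sigE e)).
Proof.
move=> e1 e2 [h12 hs].
case hR: (mE p e1 \in Rs).
  by apply: (w2_unique h12); apply: in_Rs_w2; rewrite -h12.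
have key : forall v', inc v' (mE p e1) -> spl v' -> e1 = e2.
  move=> v' hv sv.
  have [x1 [hx1 m1]] := end_over hv.
  have [x2 [hx2 m2]] := end_over (e := e2) (v' := v') ltac:(by rewrite -h12).
  have s1 := E3 hx1; have s2 := E3 hx2.
  rewrite m1 sv andbT in s1; rewrite m2 sv andbT in s2.
  have ex : x1 = x2 by apply: V1; rewrite /= m1 m2 s1 s2 hs.
  subst x2.
  have dx : d x1 = 1 by move: sv; rewrite -m1 spl_d => /eqP.
  apply/eqP; apply/negPn/negP => ne.
  have := two_lifts hx1 hx2 h12 ne; rewrite dx.
  have := wpos e1; have := wpos e2; lia.
case s1: (spl (esrc (mE p e1))); first exact: (key _ (inc_src _) s1).
case s2: (spl (etgt (mE p e1))).
  by apply: (key _ _ s2); rewrite /inc eqxx orbT.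
move: hs; rewrite !sigE_nn -?h12 ?s1 ?s2 // hR /=.
case: Hsurj => hsV _ _; have [x hx] := hsV (esrc (mE p e1)).
have dx : d x = 2 by apply: spl_d2; rewrite hx s1.
have i1 : inc x e1 by apply: (lift_at (inc_src _) hx dx).
have i2 : inc x e2 by apply: (lift_at _ hx dx); rewrite -h12 inc_src.
case: pickP => [f0 /eqP hf0|none]; last by have := none e1; rewrite eqxx.
have i0 : inc x f0 by apply: (lift_at _ hx dx); rewrite hf0 inc_src.
rewrite !(inj_eq (@Some_inj _)).
case: (f0 =P e1) => [<-|n1]; case: (f0 =P e2) => [<-|n2] //=.
move=> _; apply/eqP; apply/negPn/negP => n12.
have := le_sum3 (P := fun g => inc x g && (mE p g == mE p e1)) (wE p)
  (a := e1) (b := e2) (c := f0) ltac:(by rewrite /= i1 eqxx)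
  ltac:(by rewrite /= i2 h12 eqxx) ltac:(by rewrite /= i0 hf0 eqxx) n12
  ltac:(by apply/eqP => h; apply: n1) ltac:(by apply/eqP => h; apply: n2).
rewrite ldeg_at // dx; have := wpos e1; have := wpos e2; have := wpos f0; lia.
Qed.

Lemma E2 e' b : (b ==> (e' \notin Rs)) -> exists e, mE p e = e' /\ sigE e = b.
Proof.
move=> hb; case hR: (e' \in Rs).
  have b0 : b = false by move: hb; rewrite hR; case: b.
  move: (hR); rewrite -Rp_eq inE => /existsP[f /andP[/eqP hf _]].
  by exists f; rewrite /sigE hf hR b0.
have lift_ex : forall x, mV p x = esrc e' \/ mV p x = etgt e' ->
    exists f, inc x f /\ mE p f = e'.
  move=> x hx.
  have hi : inc (mV p x) e' by case: hx => ->; rewrite /inc eqxx ?orbT.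
  have := ldegE_d hi; rewrite /ldegE => h.
  have [f [/andP[xf /eqP hf] _]] := exists_term (P := fun g => inc x g && (mE p g == e'))
    (F := wE p) ltac:(by rewrite h d_pos).
  by exists f.
have key : forall v', (v' = esrc e' \/ v' = etgt e') -> spl v' ->
    exists e, mE p e = e' /\ sigE e = b.
  move=> v' hv sv.
  have [x [hx sx]] := V2 (v' := v') (b := b) ltac:(by rewrite sv implybT).
  have [f [xf hf]] := lift_ex x ltac:(by rewrite hx).
  exists f; split => //.
  by have := E3 xf; rewrite hx sv andbT sx.
case s1: (spl (esrc e')); first exact: (key _ (or_introl erefl) s1).
case s2: (spl (etgt e')); first exact: (key _ (or_intror erefl) s2).
case: Hsurj => hsV _ _; have [x hx] := hsV (esrc e').
have dx : d x = 2 by apply: spl_d2; rewrite hx s1.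
have [f [xf hf]] := lift_ex x (or_introl hx).
have [f0 hp] : exists f0, [pick g | mE p g == e'] = Some f0.
  by case: pickP => [f0 _|none]; [exists f0 | have := none f; rewrite hf eqxx].
have hf0 : mE p f0 = e' by move: hp; case: pickP => // g /eqP hg [<-].
have i0 : inc x f0 by apply: (lift_at _ hx dx); rewrite hf0 inc_src.
have h := ldeg_at hx; rewrite (bigD1 f0) /= in h; last by rewrite i0 hf0 eqxx.
rewrite (wE_val f0) hf0 hR dx in h.
have [f1 [/andP[/andP[xf1 /eqP hf1] n10] _]] :=
  exists_term (P := fun g => (inc x g && (mE p g == e')) && (g != f0)) (F := wE p)
  ltac:(by move: h; rewrite /=; lia).
have sE : forall g, mE p g = e' -> sigE g = (f0 != g).
  move=> g hg; rewrite sigE_nn ?hg ?s1 ?s2 // hR hp /=.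
  by rewrite (inj_eq (@Some_inj _)).
clear key; case: b hb => _.
  by exists f1; split => //; rewrite sE // eq_sym.
by exists f0; split => //; rewrite sE // eqxx.
Qed.


Lemma structured_sig : structured p Rs sig sigE.
Proof.
split.
- exact: V1.
- exact: V2.
- by move=> v; apply/implyP => /andP[].
- exact: E1.
- exact: E2.
- by move=> e; apply/implyP => /andP[].
- exact: E3.
- exact: wE_val.
- exact: mL_inj.
- by case: Hsurj.
- exact: wL_val.
- by move=> l; rewrite sig_nspl // spl_d legv_d2.
- exact: gen_val.
Qed.

End Cover.

Lemma cover_structured (R : realType) (T G : mgraph R) (p : gmap G T) (Rs : {set edge T}) :
  is_tree T -> (forall v', par Rs v' = odd (nl v')) -> g2_cover p ->
  exists sg sgE, structured p Rs sg sgE.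
Proof.
move=> Htree HRs [Hconn _ Hlegs [Hmor [Hsurj [d [Hharm Hfib HRH]]]] Hbr].
have [tau Ht] := cobound Htree (Ep Rs) (cc p).
exists (sig p Rs tau), (sigE p Rs tau).
apply: (structured_sig (d := d)) => //.
by rewrite Hlegs.
Qed.


Lemma inj_surj_bij (A B : finType) (f : A -> B) :
  injective f -> (forall y, exists x, f x = y) -> bijective f.
Proof.
move=> fi fs.
have ex : forall y, exists x, f x == y by move=> y; have [x hx] := fs y; exists x; apply/eqP.
exists (fun y => xchoose (ex y)).
  by move=> x; apply: fi; apply/eqP; exact: (xchooseP (ex (f x))).
by move=> y; apply/eqP; exact: (xchooseP (ex y)).
Qed.

Section Iso.
Variable R : realType.
Variables (T G1 G2 : mgraph R) (p1 : gmap G1 T) (p2 : gmap G2 T) (Rs : {set edge T}).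
Variables (sg1 : vert G1 -> bool) (sgE1 : edge G1 -> bool).
Variables (sg2 : vert G2 -> bool) (sgE2 : edge G2 -> bool).
Hypothesis M1 : is_morphism p1.
Hypothesis M2 : is_morphism p2.
Hypothesis S1 : structured p1 Rs sg1 sgE1.
Hypothesis S2 : structured p2 Rs sg2 sgE2.

Lemma exV v : exists u, (mV p2 u == mV p1 v) && (sg2 u == sg1 v).
Proof.
have [u [h1 h2]] := s_V2 S2 (v' := mV p1 v) (b := sg1 v) (s_V3 S1 v).
by exists u; rewrite h1 h2 !eqxx.
Qed.
Definition fV v := xchoose (exV v).
Lemma fV_spec v : mV p2 (fV v) = mV p1 v /\ sg2 (fV v) = sg1 v.
Proof. by have /andP[/eqP -> /eqP ->] := xchooseP (exV v). Qed.

Lemma exE e : exists u, (mE p2 u == mE p1 e) && (sgE2 u == sgE1 e).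
Proof.
have [u [h1 h2]] := s_E2 S2 (e' := mE p1 e) (b := sgE1 e) (s_E4 S1 e).
by exists u; rewrite h1 h2 !eqxx.
Qed.
Definition fE e := xchoose (exE e).
Lemma fE_spec e : mE p2 (fE e) = mE p1 e /\ sgE2 (fE e) = sgE1 e.
Proof. by have /andP[/eqP -> /eqP ->] := xchooseP (exE e). Qed.

Lemma exL l : exists u, mL p2 u == mL p1 l.
Proof. by have [u hu] := s_L2 S2 (mL p1 l); exists u; apply/eqP. Qed.
Definition fL l := xchoose (exL l).
Lemma fL_spec l : mL p2 (fL l) = mL p1 l.
Proof. exact/eqP/(xchooseP (exL l)). Qed.

Lemma fV_bij : bijective fV.
Proof.
apply: inj_surj_bij.
  move=> v1 v2 h; apply: (s_V1 S1).
  by have [a1 b1] := fV_spec v1; have [a2 b2] := fV_spec v2; rewrite /= -a1 -b1 -a2 -b2 h.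
move=> u; have [v [h1 h2]] := s_V2 S1 (v' := mV p2 u) (b := sg2 u) (s_V3 S2 u).
exists v; apply: (s_V1 S2); have [a b] := fV_spec v.
by rewrite /= a b h1 h2.
Qed.

Lemma fE_bij : bijective fE.
Proof.
apply: inj_surj_bij.
  move=> v1 v2 h; apply: (s_E1 S1).
  by have [a1 b1] := fE_spec v1; have [a2 b2] := fE_spec v2; rewrite /= -a1 -b1 -a2 -b2 h.
move=> u; have [v [h1 h2]] := s_E2 S1 (e' := mE p2 u) (b := sgE2 u) (s_E4 S2 u).
exists v; apply: (s_E1 S2); have [a b] := fE_spec v.
by rewrite /= a b h1 h2.
Qed.

Lemma fL_bij : bijective fL.
Proof.
apply: inj_surj_bij.
  by move=> l1 l2 h; apply: (s_L1 S1); rewrite -!fL_spec h.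
move=> u; have [l hl] := s_L2 S1 (mL p2 u).
by exists l; apply: (s_L1 S2); rewrite fL_spec hl.
Qed.

Lemma end_match e x y : inc x e -> inc y (fE e) -> mV p2 y = mV p1 x -> y = fV x.
Proof.
move=> hx hy hm; apply: (s_V1 S2); have [a b] := fV_spec x.
rewrite /= a b hm (s_E3 S2 hy) (s_E3 S1 hx) hm; by have [_ ->] := fE_spec e.
Qed.

Lemma iso12 : cover_iso p1 p2.
Proof.
exists fV, fE, fL; split; first by split; [exact: fV_bij | exact: fE_bij | exact: fL_bij].
split.
  move=> e; have [a _] := fE_spec e.
  have xe : inc (esrc e) e by rewrite /inc eqxx.
  have ye : inc (etgt e) e by rewrite /inc eqxx orbT.
  have xf : inc (esrc (fE e)) (fE e) by rewrite /inc eqxx.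
  have yf : inc (etgt (fE e)) (fE e) by rewrite /inc eqxx orbT.
  case: M1 => _ _ H1 _ _; case: M2 => _ _ H2 _ _.
  case: (H1 e) => -[b1 b2]; case: (H2 (fE e)) => -[c1 c2]; rewrite a in c1 c2.
  - by left; split; apply/esym/(end_match (e := e)); rewrite // ?c1 ?c2 ?b1 ?b2.
  - by right; split; apply/esym/(end_match (e := e)); rewrite // ?c1 ?c2 ?b1 ?b2.
  - by right; split; apply/esym/(end_match (e := e)); rewrite // ?c1 ?c2 ?b1 ?b2.
  - by left; split; apply/esym/(end_match (e := e)); rewrite // ?c1 ?c2 ?b1 ?b2.
split.
  move=> l; apply: (s_V1 S2); have [a b] := fV_spec (legv l).
  case: M1 => _ _ _ L1 _; case: M2 => _ _ _ L2 _.
  by rewrite /= a b -L1 -L2 fL_spec !(s_L4 S1, s_L4 S2).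
split.
  by move=> v; rewrite (s_G S2) (s_G S1); have [-> _] := fV_spec v.
split.
  move=> e; case: M1 => _ _ _ _ N1; case: M2 => _ _ _ _ N2.
  have := N2 (fE e); rewrite (s_W S2); have [-> _] := fE_spec e.
  rewrite (N1 e) (s_W S1) => h; apply: (mulfI _ (esym h)).
  by case: (_ \in _); rewrite pnatr_eq0.
split.
- by move=> v; have [-> _] := fV_spec v.
- by move=> e; have [-> _] := fE_spec e.
- exact: fL_spec.
- by move=> e; rewrite (s_W S2) (s_W S1); have [-> _] := fE_spec e.
- by move=> l; rewrite (s_L3 S2) (s_L3 S1).
Qed.

End Iso.


Lemma sum_sig (I : finType) (P : pred I) (Q : pred I) (F : I -> nat) :
  (\sum_(x : {x | P x} | Q (sval x)) F (sval x))%N = (\sum_(i | P i && Q i) F i)%N.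
Proof.
rewrite (reindex_omap (sval : {x | P x} -> I) insub); last first.
  by move=> i /andP[iA Pi]; rewrite insubT.
by apply: eq_bigl=> -[i iA]/=; rewrite insubT ?iA /= eqxx andbT.
Qed.

Lemma sum_pair (A B : finType) (P : pred (A * B)) (F : A * B -> nat) :
  (\sum_(z | P z) F z)%N = (\sum_(a : A) \sum_(b : B | P (a, b)) F (a, b))%N.
Proof. by rewrite pair_big_dep; apply: eq_big => -[a b]. Qed.

Lemma sum_bool (C : pred bool) (F : bool -> nat) :
  (\sum_(b | C b) F b)%N = ((if C true then F true else 0) + (if C false then F false else 0))%N.
Proof. by rewrite big_mkcond big_bool. Qed.

Lemma sum_cst1 (I : finType) (x : I) : (\sum_(v : I) ((x == v) : nat))%N = 1%N.
Proof.
rewrite (bigD1 x) //= eqxx big1 // => v /negbTE; by rewrite eq_sym => ->.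
Qed.

Section Canon.
Variable R : realType.
Variable T : mgraph R.
Hypothesis Htree : is_tree T.
Variable Rs : {set edge T}.
Hypothesis HRs : forall v, par Rs v = odd (nl v).

Local Notation spl := (spl0 Rs).

Lemma spl_noR v' e' : spl v' -> inc v' e' -> e' \notin Rs.
Proof.
rewrite /spl0 /rr => /eqP h ie; apply/negP => eR.
have : (inc v' e' : nat) <= degS Rs v' by apply: (le_sum1 (P := fun e => e \in Rs)).
rewrite ie; lia.
Qed.

Lemma spl_nolegs v' l : spl v' -> legv l != v'.
Proof.
rewrite /spl0 /rr => /eqP h; apply/negP => /eqP hl.
have : 0 < nl v' by apply/card_gt0P; exists l; rewrite inE hl.
lia.
Qed.

Lemma rr_even v : ~~ odd (rr Rs v).
Proof. by rewrite /rr oddD odd_degS HRs addbb. Qed.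

Definition validV (z : vert T * bool) := ~~ z.2 || spl z.1.
Definition validE (z : edge T * bool) := ~~ z.2 || (z.1 \notin Rs).
Definition VC := {z | validV z}.
Definition EC := {z | validE z}.

Lemma labP v' b : validV (v', b && spl v').
Proof. by rewrite /validV /=; case: b; case: (spl v'). Qed.
Definition lab v' b : VC := exist _ (v', b && spl v') (labP v' b).

Definition wC (e' : edge T) : nat := if e' \in Rs then 2 else 1.
Lemma wC_pos e' : 0 < wC e'. Proof. by rewrite /wC; case: (_ \in _). Qed.

Definition esrcC (y : EC) := lab (esrc (sval y).1) (sval y).2.
Definition etgtC (y : EC) := lab (etgt (sval y).1) (sval y).2.
Definition legvC (l : leg T) := lab (legv l) false.
Definition genC (x : VC) := ((rr Rs (sval x).1 - 2)./2)%N.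
Definition lenC (y : EC) : R := len (sval y).1 / (wC (sval y).1)%:R.
Lemma lenC_pos y : (0 < lenC y)%R.
Proof. by apply: divr_gt0; [exact: len_pos | rewrite ltr0n wC_pos]. Qed.

Definition GC : mgraph R := @MGraph R VC EC (leg T)
  esrcC etgtC legvC genC lenC lenC_pos.

Definition pC : gmap GC T := @GMap R GC T (fun x : VC => (sval x).1) (fun y : EC => (sval y).1)
  id (fun y : EC => wC (sval y).1) (fun _ => 2%N).
Definition dC (x : VC) : nat := if spl (sval x).1 then 1 else 2.

Lemma lab_eq a b (x : VC) :
  (lab a b == x) = (a == (sval x).1) && ((b && spl a) == (sval x).2).
Proof. by rewrite -val_eqE /=; case: (sval x). Qed.

Lemma incC (x : VC) (y : EC) : @inc R GC x y =
  inc (sval x).1 (sval y).1 && (((sval y).2 && spl (sval x).1) == (sval x).2).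
Proof.
rewrite /inc /= /esrcC /etgtC !lab_eq.
case h1: (esrc (sval y).1 == (sval x).1); case h2: (etgt (sval y).1 == (sval x).1) => //=.
- by have := noloop Htree (sval y).1; rewrite (eqP h1) (eqP h2) eqxx.
- by rewrite (eqP h1) orbF.
- by rewrite (eqP h2).
Qed.

Lemma pair_fix (A B : finType) (P : pred (A * B)) (F : A * B -> nat) a :
  (\sum_(z | P z && (z.1 == a)) F z)%N = (\sum_(b | P (a, b)) F (a, b))%N.
Proof.
rewrite sum_pair (bigD1 a) //=.
rewrite [X in (_ + X)%N]big1 ?addn0; first by apply: eq_bigl => b; rewrite eqxx andbT.
by move=> a' na; rewrite big_pred0 // => b; rewrite (negbTE na) andbF.
Qed.

Lemma ldegE_C (x : VC) e' : inc (sval x).1 e' -> ldegE pC x e' = dC x.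
Proof.
move=> ie; rewrite /ldegE.
transitivity (\sum_(z | validE z && ((inc (sval x).1 z.1 &&
    ((z.2 && spl (sval x).1) == (sval x).2)) && (z.1 == e'))) wC z.1)%N.
  etransitivity; last exact: (@sum_sig _ validE (fun z => (inc (sval x).1 z.1 &&
    ((z.2 && spl (sval x).1) == (sval x).2)) && (z.1 == e')) (fun z => wC z.1)).
  by apply: eq_bigl => y; rewrite incC.
under eq_bigl => z do rewrite andbA.
rewrite pair_fix sum_bool /=.
have vx : validV (sval x) := svalP x.
have h1 : spl (sval x).1 -> e' \notin Rs := fun s => spl_noR s ie.
move: vx h1; rewrite /dC /wC /validE /validV ie /=.
case: (e' \in Rs); case: (spl _); case: (sval x).2 => //=; by move=> _ /(_ erefl).
Qed.

Lemma fib_C v' : (\sum_(x : VC | (sval x).1 == v') dC x)%N = 2%N.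
Proof.
etransitivity; first exact: (@sum_sig _ validV (fun z => z.1 == v') (fun z => if spl z.1 then 1 else 2)%N).
rewrite pair_fix sum_bool /validV /=.
by case: (spl v').
Qed.

Lemma ldegL_C (x : VC) l' : legv l' = (sval x).1 -> ldegL pC x l' = dC x.
Proof.
move=> hl; rewrite /ldegL /=.
have ns : ~~ spl (sval x).1.
  by apply/negP => s; have := spl_nolegs l' s; rewrite hl eqxx.
have bx : (sval x).2 = false.
  by have := svalP x; rewrite /validV (negbTE ns) orbF => /negbTE.
rewrite (bigD1 l') /=; last by rewrite /legvC lab_eq hl bx !eqxx.
rewrite big1 ?addn0 /dC ?(negbTE ns) // => l /andP[/andP[_ /eqP ->]]; by rewrite eqxx.
Qed.

Lemma nram_C (x : VC) : nram pC x = if spl (sval x).1 then 0%N else rr Rs (sval x).1.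
Proof.
rewrite /nram /=.
set v' := (sval x).1; set bx := (sval x).2.
have vx : ~~ bx || spl v' := svalP x.
have hE : #|[pred y : EC | @inc R GC x y && (wC (sval y).1 == 2)]| =
    if spl v' then 0%N else degS Rs v'.
  rewrite -sum1_card.
  transitivity (\sum_(y : EC | (inc v' (sval y).1 && (((sval y).2 && spl v') == bx))
      && (wC (sval y).1 == 2)) 1)%N.
    by apply: eq_bigl => y; rewrite inE incC.
  etransitivity; first exact: (@sum_sig _ validE (fun z => (inc v' z.1 &&
     ((z.2 && spl v') == bx)) && (wC z.1 == 2)) (fun _ => 1%N)).
  rewrite sum_pair /degS big_mkcond /=.
  case sv: (spl v').
  { rewrite big1 // => e' _; rewrite sum_bool /validE /wC /=.
    have h1 := @spl_noR v' e'; rewrite sv in h1.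
    move: h1; case: (e' \in Rs); case: (inc v' e') => //=.
    all: try by move=> /(_ isT isT).
    all: by move=> _; rewrite ?andbF. }
  have bf : bx = false by move: vx; rewrite sv orbF => /negbTE.
  rewrite [RHS]big_mkcond; apply: eq_bigr => e' _; rewrite sum_bool /validE /wC /= bf.
  by case: (e' \in Rs); case: (inc v' e').
have hL : #|[pred l : leg T | (legvC l == x) && (2 == 2)%N]| =
    if spl v' then 0%N else nl v'.
  case sv: (spl v').
    apply: eq_card0 => l; rewrite !inE /legvC lab_eq.
    by rewrite (negbTE (spl_nolegs l sv)).
  have bf : bx = false by move: vx; rewrite sv orbF => /negbTE.
  apply: eq_card => l; rewrite !inE /legvC lab_eq -/v' -/bx bf.
  by case: (legv l == v').
rewrite hE hL /rr; by case: (spl v').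
Qed.

Lemma RH_C (x : VC) :
  (2%:Z - 2%:Z * (genC x)%:Z = 2%:Z * (dC x)%:Z - (nram pC x)%:Z)%R.
Proof.
rewrite nram_C /genC /dC; set r := rr Rs (sval x).1.
case sv: (spl (sval x).1).
  have r0 : r = 0%N by apply/eqP.
  by rewrite r0.
have r2 : (2 <= r)%N.
  have := rr_even (sval x).1; have : r != 0%N by rewrite /r -/(spl0 _ _) sv.
  rewrite -/r; case: r => [|[|r]] //.
have e : (((r - 2)./2).*2 = r - 2)%N.
  by rewrite halfK oddB // (negbTE (rr_even _)) subn0.
move: e; rewrite -mul2n; lia.
Qed.

Lemma morC : is_morphism pC.
Proof.
split => //.
- by move=> y; exact: wC_pos.
- by move=> y; left.
- move=> y /=; rewrite /lenC mulrC divfK //.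
  by rewrite pnatr_eq0 -lt0n wC_pos.
Qed.

Lemma surjC : surjective_map pC.
Proof.
split.
- by move=> v'; exists (lab v' false).
- by move=> e'; exists (exist validE (e', false) isT).
- by move=> l'; exists l'.
Qed.

Lemma harmC : harmonic_with pC dC.
Proof. by move=> x; split; [exact: ldegE_C | exact: ldegL_C]. Qed.

Lemma adj_symG (G : mgraph R) : symmetric (@adj R G).
Proof. by move=> u v; rewrite !adjE adjS_sym. Qed.

Lemma lift_step (x : VC) w' : adj (sval x).1 w' ->
  exists y : VC, @adj R GC x y /\ (sval y).1 = w'.
Proof.
move=> /existsP[e' he].
set v' := (sval x).1; set bx := (sval x).2.
have vx : ~~ bx || spl v' := svalP x.
have ie : inc v' e'.
  by rewrite /inc; case/orP: he => /andP[/eqP-> /eqP->]; rewrite eqxx ?orbT.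
set b := bx && (e' \notin Rs).
have vb : validE (e', b) by rewrite /validE /b; case: (bx); case: (e' \in Rs).
pose y := exist validE (e', b) vb.
have hx : lab v' b = x.
  apply/eqP; rewrite lab_eq eqxx /= -/v' -/bx /b.
  by case: (boolP bx) vx => hbx /= => [sv|_] //; rewrite sv (spl_noR sv ie).
exists (lab w' b); split => //.
apply/existsP; exists y; rewrite /esrcC /etgtC /=.
rewrite /= /esrcC /etgtC /y /=; case/orP: he => /andP[/eqP h1 /eqP h2]; rewrite h1 h2 -/v' hx !eqxx ?orbT //.
Qed.

Lemma lift_path (p0 : seq (vert T)) v' : path (@adj R T) v' p0 ->
  forall x : VC, (sval x).1 = v' ->
  exists y : VC, (sval y).1 = last v' p0 /\ connect (@adj R GC) x y.
Proof.
elim: p0 v' => [|w p IH] v' /=.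
  by move=> _ x hx; exists x; split => //; exact: connect0.
case/andP => hvw hp x hx.
have [y [hxy hy]] := lift_step (x := x) (w' := w) ltac:(by rewrite hx).
have [z [hz cz]] := IH w hp y hy.
by exists z; split => //; apply: connect_trans (connect1 hxy) cz.
Qed.

Hypothesis Hlegs : #|leg T| = 6.

Lemma connC : connected_graph GC.
Proof.
have [l0 _] : exists l0 : leg T, l0 \in leg T by apply/card_gt0P; rewrite Hlegs.
set r0 := legv l0.
have nr0 : ~~ spl r0 by apply/negP => s; have := spl_nolegs l0 s; rewrite eqxx.
have toroot : forall x : VC, connect (@adj R GC) x (lab r0 false).
  move=> x; have /connectP[p0 hp hl] := Htree.1 (sval x).1 r0.
  have [y [hy cy]] := lift_path hp erefl.
  rewrite -hl in hy.
  suff -> : lab r0 false = y by [].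
  apply/eqP; rewrite lab_eq hy eqxx /=.
  have := svalP y; rewrite /validV hy (negbTE nr0) orbF.
  by case: (sval y).2.
move=> u v; apply: connect_trans (toroot u) _.
by rewrite (sym_connect_sym (@adj_symG GC)); exact: toroot.
Qed.

Lemma sum_inc2 (e : edge T) : (\sum_(v : vert T) (inc v e : nat))%N = 2%N.
Proof.
rewrite (eq_bigr (fun v => ((esrc e == v) : nat) + (etgt e == v))%N); last first.
  move=> v _; rewrite /inc; case h1: (esrc e == v); case h2: (etgt e == v) => //=.
  by have := noloop Htree e; rewrite (eqP h1) (eqP h2) eqxx.
by rewrite big_split /= !sum_cst1.
Qed.

Lemma genusC : genus GC = Posz 2.
Proof.
set g := fun v => ((rr Rs v - 2)./2)%N.
set NS := (\sum_(v : vert T) (spl v : nat))%N.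
set NE := (\sum_(e : edge T) ((e \notin Rs) : nat))%N.
have cV : #|vert GC| = (NS + #|vert T|)%N.
  rewrite (_ : #|vert GC| = #|[pred z | validV z]|); last exact: card_sig.
  rewrite -sum1_card.
  transitivity (\sum_(z | validV z) 1)%N; first by apply: eq_bigl => z; rewrite inE.
  rewrite sum_pair /NS -sum1_card -big_split /=; apply: eq_bigr => v _.
  by rewrite sum_bool /validV /=; case: (spl v).
have cE : #|edge GC| = (NE + #|edge T|)%N.
  rewrite (_ : #|edge GC| = #|[pred z | validE z]|); last exact: card_sig.
  rewrite -sum1_card.
  transitivity (\sum_(z | validE z) 1)%N; first by apply: eq_bigl => z; rewrite inE.
  rewrite sum_pair /NE -sum1_card -big_split /=; apply: eq_bigr => v _.
  by rewrite sum_bool /validE /=; case: (v \in Rs).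
have cRs : (NE + #|Rs|)%N = #|edge T|.
  have h1 : #|Rs| = (\sum_e ((e \in Rs) : nat))%N.
    by rewrite -sum1_card big_mkcond /=; apply: eq_bigr => e _; case: (e \in Rs).
  have h2 : #|edge T| = (\sum_(e : edge T) 1)%N by rewrite sum1_card.
  rewrite h1 h2 /NE -big_split /=; apply: eq_bigr => e _.
  by case: (e \in Rs).
have cG : (\sum_(x : vert GC) @gen R GC x)%N = (\sum_v g v)%N.
  etransitivity; first exact: (@sum_sig _ validV xpredT (fun z => g z.1)).
  rewrite sum_pair; apply: eq_bigr => v _; rewrite sum_bool /validV /=.
  case sv: (spl v) => //; rewrite /g.
  by move/eqP: sv => ->.
have cGr : (2 * (\sum_v g v) + 2 * #|vert T| = (\sum_v rr Rs v) + 2 * NS)%N.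
  rewrite -sum1_card /NS !big_distrr -!big_split /=; apply: eq_bigr => v _.
  rewrite /g; case sv: (spl v).
    by move/eqP: sv => ->.
  set r := rr Rs v.
  have r2 : (2 <= r)%N.
    have := rr_even v; rewrite -/r; have : r != 0%N by rewrite /r -/(spl0 _ _) sv.
    case: r => [|[|r]] //.
  have e : (((r - 2)./2).*2 = r - 2)%N.
    by rewrite halfK oddB // (negbTE (rr_even _)) subn0.
  move: e; rewrite -mul2n /=; lia.
have cRR : (\sum_v rr Rs v)%N = (2 * #|Rs| + #|leg T|)%N.
  rewrite /rr big_split /=; congr addn.
    rewrite /degS exchange_big /=.
    rewrite (eq_bigr (fun _ => 2%N)); last by move=> e _; exact: sum_inc2.
    by rewrite sum_nat_const mulnC.
  rewrite -[#|leg T|]sum1_card.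
  rewrite (eq_bigr (fun v => \sum_(l : leg T) ((legv l == v) : nat))%N); last first.
    by move=> v _; rewrite /nl -sum1_card big_mkcond.
  rewrite exchange_big /=; apply: eq_bigr => l _; exact: sum_cst1.
rewrite /genus.
have := Htree.2.
move: cV cE cRs cG cGr cRR; rewrite Hlegs.
lia.
Qed.

Lemma g2C : g2_cover pC.
Proof.
split.
- exact: connC.
- exact: genusC.
- by rewrite /= Hlegs.
- split; first exact: morC.
  split; first exact: surjC.
  exists dC; split.
  + exact: harmC.
  + exact: fib_C.
  + exact: RH_C.
- by move=> l'; exists l'.
Qed.

End Canon.


Theorem proposition4p7 (R : realType) (T : mgraph R) :
  is_tree T -> #|leg T| = 6%N -> (forall v : vert T, gen v = 0%N) ->
  (exists (G : mgraph R) (p : gmap G T), g2_cover p) /\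
  (forall (G1 G2 : mgraph R) (p1 : gmap G1 T) (p2 : gmap G2 T),
      g2_cover p1 -> g2_cover p2 -> cover_iso p1 p2).
Proof.
move=> Htree Hlegs _.
have [Rs HRs] : exists Rs : {set edge T}, forall v : vert T, par Rs v = odd (nl v).
  by apply: exists_R => //; rewrite Hlegs.
split.
  exists (GC Rs), (pC Rs); exact: g2C.
move=> G1 G2 p1 p2 h1 h2.
have [sg1 [sgE1 S1]] := cover_structured Htree HRs h1.
have [sg2 [sgE2 S2]] := cover_structured Htree HRs h2.
have M1 : is_morphism p1 by case: h1 => _ _ _ [M _] _.
have M2 : is_morphism p2 by case: h2 => _ _ _ [M _] _.
exact: (iso12 M1 M2 S1 S2).
Qed.
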